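(* Let $A$ be a finite nonempty subset of $(0,\infty)$ and let $f:A\to[0,\infty)$. Define the discrete Hirsch relation $h_f=\{(f(a)/a,\,a): a\in A\}$. Then $h_f=f$ (i.e. $h_f$ coincides with the graph $\{(a,f(a)):a\in A\}$ of $f$) if and only if $A=\{1\}$ and $f(1)=1$.
   Context: For a function $f$ on a finite set $A\subset(0,\infty)$, the Hirsch function $h_f$ is defined exactly at the points $\theta=f(a)/a$, $a\in A$, and maps $f(a)/a$ to $a$. Equality $h_f=f$ means equality of functions: same domain and same values (equivalently, equality of the graphs as sets of pairs). *)

(* Defs.v *)
From HB Require Import structures.
From mathcomp Require Import all_boot all_order all_algebra.
From mathcomp Require Import finmap.
From mathcomp Require Import reals.
Set Implicit Arguments. Unset Strict Implicit. Unset Printing Implicit Defensive.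
Import Order.TTheory GRing.Theory Num.Theory.
Local Open Scope ring_scope.
Local Open Scope fset_scope.

Definition fgraph_on {R : realType} (A : {fset R}) (f : R -> R) : {fset R * R} :=
  [fset (a, f a) | a in A].

Definition hirsch_rel {R : realType} (A : {fset R}) (f : R -> R) : {fset R * R} :=
  [fset (f a / a, a) | a in A].

(* Main.v *)
Require Import Defs.
From HB Require Import structures.
From mathcomp Require Import all_boot all_order all_algebra.
From mathcomp Require Import finmap.
From mathcomp Require Import reals.
From mathcomp Require Import lra.
Import Order.TTheory GRing.Theory Num.Theory.
Local Open Scope ring_scope.
Local Open Scope fset_scope.

Lemma seq_max (R : realType) (s : seq R) (x0 : R) : x0 \in s ->
  exists2 M, M \in s & forall x, x \in s -> x <= M.
Proof.
elim: s x0 => [//|y s IH] x0 _.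
case: s IH => [|z s] IH.
  by exists y; rewrite ?inE // => x; rewrite inE => /eqP->.
have [M Ms HM] := IH z (mem_head _ _).
have [yM|My] := leP y M.
  exists M; first by rewrite inE Ms orbT.
  by move=> x; rewrite inE => /orP[/eqP->|/HM].
exists y; first by rewrite inE eqxx.
move=> x; rewrite inE => /orP[/eqP->//|/HM xM].
exact: le_trans xM (ltW My).
Qed.

Lemma seq_min (R : realType) (s : seq R) (x0 : R) : x0 \in s ->
  exists2 M, M \in s & forall x, x \in s -> M <= x.
Proof.
elim: s x0 => [//|y s IH] x0 _.
case: s IH => [|z s] IH.
  by exists y; rewrite ?inE // => x; rewrite inE => /eqP->.
have [M Ms HM] := IH z (mem_head _ _).
have [yM|My] := leP M y.
  exists M; first by rewrite inE Ms orbT.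
  by move=> x; rewrite inE => /orP[/eqP->|/HM].
exists y; first by rewrite inE eqxx.
move=> x; rewrite inE => /orP[/eqP->//|/HM xM].
exact: le_trans (ltW My) xM.
Qed.

Theorem theorem3 (R : realType) (A : {fset R}) (f : R -> R) :
  A != fset0 ->
  (forall a, a \in A -> 0 < a) ->
  (forall a, a \in A -> 0 <= f a) ->
  (hirsch_rel A f = fgraph_on A f <-> (A = [fset (1 : R)] /\ f 1 = 1)).
Proof.
move=> A0 Apos fpos; split; last first.
  case=> -> f1; rewrite /hirsch_rel /fgraph_on; apply/fsetP => -[x y].
  apply/imfsetP/imfsetP => -[a]; rewrite inE => /eqP -> [-> ->];
    by exists 1; rewrite ?inE ?f1 ?divr1.
move=> E.
have H1 : forall a, a \in A -> (f a / a \in A) /\ f (f a / a) = a.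
  move=> a aA.
  have : (f a / a, a) \in fgraph_on A f by rewrite -E; apply: in_imfset.
  by case/imfsetP => b bA [-> ->].
have H2 : forall a, a \in A ->
    [/\ f a \in A, f (f a) = a * f a & a = f (f a) / f a].
  move=> a aA.
  have : (a, f a) \in hirsch_rel A f by rewrite E; apply: in_imfset.
  case/imfsetP => b bA [e1 e2]; rewrite e2; split => //.
  by rewrite e1 divfK // gt_eqF // Apos.
have [x0 x0A] := fset0Pn _ A0 .
have [M MA HM] := @seq_max _ _ _ x0A.
have [m mA Hm] := @seq_min _ _ _ x0A.
have M0 := Apos _ MA; have m0 := Apos _ mA.
have [fMA fMe _] := H2 _ MA; have [fmA fme _] := H2 _ mA.
have h1 : f M <= 1.
  have [ffA _ _] := H2 _ fMA.
  have := HM _ ffA; rewrite fMe -[X in _ <= X]mulr1 ler_pM2l //.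
have h2 : 1 <= f m.
  have [ffA _ _] := H2 _ fmA.
  have := Hm _ ffA; rewrite fme -[X in X <= _]mulr1 ler_pM2l //.
have h3 : m * M <= f M.
  have := Hm _ (H1 _ MA).1; rewrite ler_pdivlMr //.
have h4 : f m <= M * m.
  have := HM _ (H1 _ mA).1; rewrite ler_pdivrMr //.
have fM1 : f M = 1 by apply/eqP; rewrite eq_le h1 /=; rewrite mulrC in h4; lra.
have fm1 : f m = 1 by apply/eqP; rewrite eq_le h2 andbT; rewrite mulrC in h4; lra.
have Mm : M = m.
  have [_ _ e1] := H2 _ MA; have [_ _ e2] := H2 _ mA.
  by rewrite e1 e2 fM1 fm1.
have M1 : M = 1.
  subst m; have : M * M = 1 by rewrite mulrC in h4; lra.
  move=> MM; nra.
split; last by rewrite -{1}M1.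
apply/fsetP => x; rewrite inE; apply/idP/eqP => [xA|->]; last by rewrite -M1.
apply/eqP; rewrite eq_le -{1}M1 HM //= -M1 Mm Hm //.
Qed.
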